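(* Let $L\in\mathbb{N}$, $\alpha>0$, and let $\widetilde{ALG}$ be an online block packing algorithm with the following guarantee for capacities $\tilde B=(\tilde B_j)$: on every instance with $\tilde q_{\max}:=\max_{i,j}w_{ij}/\tilde B_j\le\alpha$, its output $\tilde x$ has average block size $\tilde B$ with slackness $\tilde\Delta$, and for every horizon $\tilde T$ and every allocation $\tilde y$ respecting per-block limits $\tilde B_j$, $SW_{[1:\tilde T+\tilde\Gamma]}(\tilde x)\ge\tilde\lambda\,SW_{[1:\tilde T]}(\tilde y)$. Let $B_j=\tilde B_j/L$. Then on every instance with $q_{\max}:=\max_{i,j}w_{ij}/B_j\le\alpha L$, the batching algorithm with parameter $L$ using $\widetilde{ALG}$ as oracle outputs an allocation $x$ of average block size $B=(B_j)$ with slackness $\Delta=(\tilde\Delta+1)L$ such that for every horizon $T$ and every allocation $y$ respecting per-block limits $B_j$, $$SW_{[1:T+\Gamma]}(x)\ge(1-\rho_{\max})^{L-1}\tilde\lambda\,SW_{[1:T]}(y),\qquad\Gamma=(\tilde\Gamma+1)L,$$ where $\rho_{\max}=\max_i\rho_i$. This holds both when the comparison allocations $\tilde y,y$ range over integral allocations and when they range over fractional allocations.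
   Context: Online block packing: $m$ resources; transactions $i$ with arrival time $a_i\in\{1,2,\dots\}$, base value $v_i\ge0$, discount $\rho_i\in[0,1]$, demand $w_i\in\mathbb{R}_+^m$; value in block $t\ge a_i$ is $v_i^t=v_i(1-\rho_i)^{t-a_i}$. An allocation is $x=\{x_i^t\}$ with $x_i^t\in[0,1]$ ($\{0,1\}$ if integral), $x_i^t=0$ for $t<a_i$, $\sum_tx_i^t\le1$; it respects per-block limits $B_j$ if $\sum_iw_{ij}x_i^t\le B_j$ for all $t,j$; it has average block size $B$ with slackness $\Delta$ if for all $T_0,K\ge1$ and $j$, $\sum_{t=T_0}^{T_0+K-1}\sum_ix_i^tw_{ij}\le(K+\Delta)B_j$. $SW_{[1:T]}(x)=\sum_{t=1}^T\sum_ix_i^tv_i^t$. An online algorithm decides block $t$ using only transactions with $a_i\le t$. Batching algorithm with parameter $L$: for each block $t$, if $t$ is not a multiple of $L$ the block is empty ($x_i^t=0$ for all $i$); if $t=\tilde tL$, the batch $\tilde A_{\tilde t}=\{i:t-L<a_i\le t\}$ is fed to $\widetilde{ALG}$ as the transactions arriving at its time step $\tilde t$, where transaction $i$ is given base value $\tilde v_i=v_i(1-\rho_i)^{\tilde tL-a_i}$, discount factor $\tilde\rho_i=1-(1-\rho_i)^L$ and the same demand $w_i$; $\widetilde{ALG}$'s block $\tilde t$ output $\tilde x_i^{\tilde t}$ is used as $x_i^t=\tilde x_i^{\tilde t}$. *)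

(* Defs.v *)
From HB Require Import structures.
From mathcomp Require Import all_boot all_order all_algebra.
Set Implicit Arguments. Unset Strict Implicit. Unset Printing Implicit Defensive.
Import Order.TTheory GRing.Theory Num.Theory.
Local Open Scope ring_scope.

Section BlockPacking.
Variable R : realFieldType.
Variable m : nat.

(* An instance with n transactions indexed by 'I_n: arrival time a_i,
   base value v_i, discount rho_i, demand w_i in R_+^m. *)
Record instance (n : nat) := Instance {
  arr : 'I_n -> nat;
  bval : 'I_n -> R;
  disc : 'I_n -> R;
  dem : 'I_n -> 'I_m -> R }.

Definition valid_instance n (I : instance n) : Prop :=
  forall i, (1 <= arr I i)%N /\ 0 <= bval I i /\ 0 <= disc I i <= 1 /\
            (forall j, 0 <= dem I i j).

(* v_i^t = v_i (1 - rho_i)^(t - a_i)  (only used for t >= a_i) *)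
Definition value n (I : instance n) (i : 'I_n) (t : nat) : R :=
  bval I i * (1 - disc I i) ^+ (t - arr I i).

(* allocation x_i^t (blocks t = 1, 2, ...); integral = true requires {0,1} *)
Definition is_allocation (integral : bool) n (I : instance n)
    (x : 'I_n -> nat -> R) : Prop :=
  (forall i t, 0 <= x i t <= 1) /\
  (integral -> forall i t, x i t = 0 \/ x i t = 1) /\
  (forall i t, (t < arr I i)%N -> x i t = 0) /\
  (forall i N, \sum_(t < N) x i t <= 1).

Definition respects_limits n (I : instance n) (B : 'I_m -> R)
    (x : 'I_n -> nat -> R) : Prop :=
  forall t j, \sum_i dem I i j * x i t <= B j.

Definition avg_block_size n (I : instance n) (B : 'I_m -> R) (Delta : R)
    (x : 'I_n -> nat -> R) : Prop :=
  forall T0 K j, (1 <= T0)%N -> (1 <= K)%N ->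
    \sum_(T0 <= t < T0 + K) \sum_i x i t * dem I i j <= (K%:R + Delta) * B j.

Definition SW n (I : instance n) (x : 'I_n -> nat -> R) (T : nat) : R :=
  \sum_(1 <= t < T.+1) \sum_i x i t * value I i t.

Definition qmax_le n (I : instance n) (B : 'I_m -> R) (a : R) : Prop :=
  forall i j, dem I i j / B j <= a.

Definition rho_max n (I : instance n) : R := \big[Num.max/0]_i disc I i.

Definition algorithm := forall n, instance n -> 'I_n -> nat -> R.

Definition online (ALG : algorithm) : Prop :=
  forall n (I I' : instance n) t,
    (forall i, (arr I i <= t)%N = (arr I' i <= t)%N) ->
    (forall i, (arr I i <= t)%N ->
       [/\ arr I i = arr I' i, bval I i = bval I' i, disc I i = disc I' i
         & dem I i = dem I' i]) ->
    forall i, ALG n I i t = ALG n I' i t.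

(* the batched instance: transaction i belongs to batch ta_i = ceil(a_i/L),
   i.e. ta_i L - L < a_i <= ta_i L *)
Definition batch_arr (L : nat) n (I : instance n) (i : 'I_n) : nat :=
  ((arr I i + L.-1) %/ L)%N.

Definition batch_inst (L : nat) n (I : instance n) : instance n :=
  Instance (batch_arr L I)
    (fun i => bval I i * (1 - disc I i) ^+ (batch_arr L I i * L - arr I i))
    (fun i => 1 - (1 - disc I i) ^+ L)
    (dem I).

Definition batching (ALG : algorithm) (L : nat) n (I : instance n)
    : 'I_n -> nat -> R :=
  fun i t => if (L %| t)%N then ALG n (batch_inst L I) i (t %/ L)%N else 0.

End BlockPacking.

(* Main.v *)
Require Import Defs.
From HB Require Import structures.
From mathcomp Require Import all_boot all_order all_algebra.
From mathcomp Require Import zify ring lra.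
Import Order.TTheory GRing.Theory Num.Theory.
Local Open Scope ring_scope.

Definition ceild (L x : nat) : nat := ((x + L.-1) %/ L)%N.

Lemma ceild_ge (L a : nat) : (0 < L)%N -> (a <= ceild L a * L)%N.
Proof.
move=> L0; rewrite /ceild. have := divn_eq (a + L.-1) L.
have := ltn_pmod (a + L.-1) L0. lia.
Qed.

Lemma ceild_le (L a : nat) : (0 < L)%N -> (ceild L a * L <= a + L.-1)%N.
Proof. move=> L0; exact: leq_trunc_div. Qed.

Lemma ceild0 L : (0 < L)%N -> ceild L 0 = 0%N.
Proof. move=> L0; rewrite /ceild add0n divn_small //; lia. Qed.

Lemma ceildS L b : (0 < L)%N ->
  ceild L b.+1 = (ceild L b + (L %| b))%N.
Proof.
move=> L0; rewrite /ceild addSn divnS // -addnS prednK // dvdn_addl ?dvdnn //.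
by rewrite addnC.
Qed.

Lemma ceild_dvd L b : (0 < L)%N -> (L %| b)%N -> ceild L b = (b %/ L)%N.
Proof.
move=> L0 /dvdnP [q ->]; rewrite /ceild mulnK // divnDl ?dvdn_mull //.
by rewrite mulnK // divn_small ?addn0 //; lia.
Qed.

Lemma sum_batch (R : realFieldType) L (f : nat -> R) a b : (0 < L)%N -> (a <= b)%N ->
  \sum_(a <= t < b) (if (L %| t)%N then f (t %/ L)%N else 0)
  = \sum_(ceild L a <= k < ceild L b) f k.
Proof.
move=> L0; elim: b => [|b IH].
  by rewrite leqn0 => /eqP ->; rewrite ceild0 // !big_geq.
rewrite leq_eqVlt => /orP [/eqP -> | ]; first by rewrite !big_geq.
rewrite ltnS => ab; rewrite big_nat_recr //= IH // ceildS //.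
have cab : (ceild L a <= ceild L b)%N by apply: leq_div2r; lia.
case: ifP => Lb /=; last by rewrite addn0 addr0.
by rewrite addn1 big_nat_recr //= (@ceild_dvd L b L0 Lb).
Qed.

Lemma sum_blocks (R : realFieldType) L (g : nat -> R) K :
  \sum_(1 <= t < (K * L).+1) g t =
  \sum_(1 <= k < K.+1) \sum_((k.-1 * L).+1 <= t < (k * L).+1) g t.
Proof.
elim: K => [|K IH]; first by rewrite mul0n !big_geq.
rewrite [RHS]big_nat_recr //= -IH (big_cat_nat _ (n := (K * L).+1)) //=.
by rewrite ltnS mulSn leq_addl.
Qed.

Lemma value_ge0 (R : realFieldType) m n (I : instance R m n) i t :
  valid_instance I -> 0 <= value I i t.
Proof.
move=> /(_ i) [_ [b0 [/andP [d0 d1] _]]].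
rewrite /value mulr_ge0 // exprn_ge0 // subr_ge0 //.
Qed.

Lemma SW_ge0 (R : realFieldType) m n (I : instance R m n) x T :
  valid_instance I -> (forall i t, 0 <= x i t) -> 0 <= SW I x T.
Proof.
move=> vI x0; rewrite /SW sumr_ge0 // => t _; rewrite sumr_ge0 // => i _.
by rewrite mulr_ge0 ?value_ge0.
Qed.

Lemma SW_mono (R : realFieldType) m n (I : instance R m n) x T1 T2 :
  valid_instance I -> (forall i t, 0 <= x i t) -> (T1 <= T2)%N ->
  SW I x T1 <= SW I x T2.
Proof.
move=> vI x0 T12; rewrite /SW [X in _ <= X](big_cat_nat _ (n := T1.+1)) //= ?ltnS //.
rewrite lerDl sumr_ge0 // => t _; rewrite sumr_ge0 // => i _.
by rewrite mulr_ge0 ?value_ge0.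
Qed.

Lemma blk_le1 (R : realFieldType) (y : nat -> R) lo hi :
  (forall t, 0 <= y t) -> (forall N, \sum_(t < N) y t <= 1) ->
  \sum_(lo <= t < hi) y t <= 1.
Proof.
move=> y0 y1; case: (leqP lo hi) => h; last by rewrite big_geq ?ler01 // ltnW.
apply: le_trans (y1 hi); rewrite -(big_mkord xpredT).
by rewrite (big_cat_nat (leq0n lo) h) /= lerDr sumr_ge0.
Qed.

Lemma value_batch (R : realFieldType) m n (I : instance R m n) L i k :
  (0 < L)%N -> (batch_arr L I i <= k)%N ->
  value (batch_inst L I) i k = value I i (k * L).
Proof.
move=> L0 hk; rewrite /value /=.
have -> : 1 - (1 - (1 - disc I i) ^+ L) = (1 - disc I i) ^+ L by ring.
rewrite -exprM -mulrA -exprD; congr (_ * _ ^+ _).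
have := @ceild_ge L (arr I i) L0; rewrite /batch_arr -/(ceild L (arr I i)) in hk *.
rewrite mulnBr; move: hk; set c := ceild L (arr I i) => hk ha.
have : (L * c <= L * k)%N by rewrite leq_mul2l hk orbT.
rewrite [(L * c)%N]mulnC [(L * k)%N]mulnC; lia.
Qed.

Theorem lemma9 (R : realFieldType) (m : nat) (L : nat) (alpha : R)
    (ALG : algorithm R m) (Bt : 'I_m -> R) (Dt : R) (Gt : nat) (lt : R)
    (integ : bool) :
  (0 < L)%N -> 0 < alpha -> (forall j, 0 < Bt j) ->
  online ALG ->
  (forall n (I : instance R m n), valid_instance I ->
     is_allocation false I (ALG n I)) ->
  (forall n (I : instance R m n), valid_instance I -> qmax_le I Bt alpha ->
     avg_block_size I Bt Dt (ALG n I) /\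
     (forall (T : nat) (y : 'I_n -> nat -> R),
        is_allocation integ I y -> respects_limits I Bt y ->
        lt * SW I y T <= SW I (ALG n I) (T + Gt))) ->
  forall n (I : instance R m n), valid_instance I ->
    qmax_le I (fun j => Bt j / L%:R) (alpha * L%:R) ->
    is_allocation false I (batching ALG L I) /\
    avg_block_size I (fun j => Bt j / L%:R) ((Dt + 1) * L%:R)
      (batching ALG L I) /\
    (forall (T : nat) (y : 'I_n -> nat -> R),
       is_allocation integ I y -> respects_limits I (fun j => Bt j / L%:R) y ->
       (1 - rho_max I) ^+ L.-1 * lt * SW I y T
         <= SW I (batching ALG L I) (T + (Gt + 1) * L)).
Proof.
move=> L0 alpha0 Bt0 _ Halloc Hguar n I vI qI.
have Lr0 : 0 < L%:R :> R by rewrite ltr0n.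
have Dt1 : forall j : 'I_m, 0 <= Dt + 1.
  move=> j.
  pose I0 := @Instance R m 0 (fun _ => 1%N) (fun _ => 0) (fun _ => 0) (fun _ _ => 0).
  have v0 : valid_instance I0 by case.
  have q0 : qmax_le I0 Bt alpha by case.
  have [h _] := Hguar 0%N I0 v0 q0.
  have := h 1%N 1%N j isT isT; rewrite big_nat1 big_ord0 addrC => H.
  by rewrite -(pmulr_lge0 _ (Bt0 j)).
pose I' := batch_inst L I.
have vI' : valid_instance I'.
  move=> i; have [a1 [b0 [/andP [d0 d1] w0]]] := vI i.
  have p0 : 0 <= 1 - disc I i by rewrite subr_ge0.
  have p1 : 1 - disc I i <= 1 by rewrite lerBlDr lerDl.
  split; [|split; [|split]] => //=.
  - by rewrite /batch_arr leq_divRL // mul1n; lia.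
  - by rewrite mulr_ge0 // exprn_ge0.
  - have := exprn_ile1 L p0 p1; have := exprn_ge0 L p0.
    move=> h1 h2; apply/andP; split; first by rewrite subr_ge0.
    by rewrite lerBlDr lerDl.
have qI' : qmax_le I' Bt alpha.
  move=> i j; have := qI i j => /=.
  have B0 := Bt0 j.
  rewrite invf_div mulrA => h.
  by rewrite -(ler_pM2r Lr0) mulrAC.
have [Havg Hsw] := Hguar n I' vI' qI'.
have [A1 [_ [A3 A4]]] := Halloc n I' vI'.
have x0 : forall i t, 0 <= batching ALG L I i t.
  by move=> i t; rewrite /batching; case: ifP => // _; case/andP: (A1 i (t %/ L)%N).
have Ln0 : L%:R != 0 :> R by rewrite pnatr_eq0 -lt0n.
split; [|split].
- split; [|split; [|split]].
  + move=> i t; rewrite /batching; case: ifP => _; [exact: A1 | by rewrite lexx ler01].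
  + by [].
  + move=> i t ht; rewrite /batching; case: ifP => // /dvdnP [q eq]; rewrite eq mulnK //.
    apply: A3 => /=; rewrite /batch_arr leq_divRL // mulSn; move: ht; rewrite eq; lia.
  + move=> i N; rewrite -(big_mkord xpredT (fun t => batching ALG L I i t)) /batching.
    rewrite (@sum_batch _ L (fun k => ALG n I' i k)) // ceild0 // big_mkord; exact: A4.
- move=> T0 K j T01 K1.
  rewrite (eq_bigr (fun t => if (L %| t)%N then (\sum_i ALG n I' i (t %/ L)%N * dem I i j) else 0)); last first.
    move=> t _; rewrite /batching; case: ifP => _ //.
    by rewrite big1 // => i _; rewrite mul0r.
  rewrite (@sum_batch _ L (fun k => \sum_i ALG n I' i k * dem I i j)) ?leq_addr //.
  set k0 := ceild L T0; set k1 := ceild L (T0 + K).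
  have B0 := Bt0 j.
  case: (leqP k1 k0) => hk.
    rewrite big_geq //; apply: mulr_ge0; last by apply: divr_ge0; exact: ltW.
    by apply: addr_ge0; [exact: ler0n | apply: mulr_ge0; [exact: Dt1 j | exact: ltW]].
  have k01 : (1 <= k0)%N.
    by rewrite /k0 /ceild leq_divRL // mul1n; clear -L0 T01; lia.
  have h := Havg k0 (k1 - k0)%N j k01; rewrite (subnKC (ltnW hk)) in h.
  apply: le_trans (h _) _; first by rewrite subn_gt0.
  have hn : ((k1 - k0) * L <= K + L)%N.
    have := @ceild_ge L T0 L0; have := @ceild_le L (T0 + K) L0; rewrite -/k0 -/k1 mulnBl.
    clearbody k0 k1; clear -L0; lia.
  have hr : (k1 - k0)%:R * L%:R <= K%:R + L%:R :> R by rewrite -natrM -natrD ler_nat.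
  set d := (k1 - k0)%:R in hr *.
  have hd : d <= K%:R / L%:R + 1 by rewrite -(ler_pM2r Lr0) mulrDl divfK ?mul1r.
  have -> : (K%:R + (Dt + 1) * L%:R) * (Bt j / L%:R) = (K%:R / L%:R + Dt + 1) * Bt j.
    by field.
  rewrite ler_pM2r //; move: hd; clearbody d; clear; lra.
move=> T y ya yr.
have [y01 [yint [y3 y4]]] := ya.
have y0 : forall i t, 0 <= y i t by move=> i t; case/andP: (y01 i t).
have rle : forall i, disc I i <= rho_max I.
  by move=> i; exact: (le_bigmax 0 (fun i => disc I i) i).
have rm1 : rho_max I <= 1.
  rewrite /rho_max; apply: bigmax_le => [|i _]; first exact: ler01.
  by case: (vI i) => _ [_ [/andP [_ h] _]].
have c0 : 0 <= (1 - rho_max I) ^+ L.-1 by rewrite exprn_ge0 // subr_ge0.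
have ALG0 : forall i t, 0 <= ALG n I' i t by move=> i t; case/andP: (A1 i t).
case: (lerP 0 lt) => lt0; last first.
  apply: le_trans (@SW_ge0 _ _ _ I _ (T + (Gt + 1) * L) vI x0).
  rewrite -mulrA mulr_ge0_le0 // mulr_le0_ge0 ?SW_ge0 // ltW //.
pose yt i k := \sum_((k.-1 * L).+1 <= t < (k * L).+1) y i t.
have yt0 : forall i k, 0 <= yt i k by move=> i k; rewrite sumr_ge0.
have yt1 : forall i k, yt i k <= 1.
  by move=> i k; apply: blk_le1 (y0 i) (y4 i).
have yt00 : forall i, yt i 0%N = 0 by move=> i; rewrite /yt big_geq.
have yta : is_allocation integ I' yt.
  split; [|split; [|split]].
  - by move=> i t; rewrite yt0 yt1.
  - move=> hi i k.
    case: (boolP (all (fun t => y i t == 0) (index_iota (k.-1 * L).+1 (k * L).+1))) => h.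
      by left; rewrite /yt big_seq big1 // => t /(allP h) /eqP.
    right; apply/eqP; rewrite eq_le yt1 /=.
    move: h; rewrite -has_predC => /hasP [t tin /= ytn].
    have e1 : y i t = 1 by case: (yint hi i t) => // e; rewrite e eqxx in ytn.
    by rewrite /yt (bigD1_seq t) //= ?iota_uniq // e1 lerDl sumr_ge0.
  - move=> i k hk; rewrite /yt big_nat big1 // => t /andP [h1 h2]; apply: y3.
    move: hk => /=; rewrite /batch_arr leq_divRL // mulSn => hk.
    move: h2 hk L0; clear; lia.
  - move=> i N; apply: (@le_trans _ _ (\sum_(k < N.+1) yt i k)).
      by rewrite big_ord_recr /= lerDl.
    rewrite -(big_mkord xpredT) big_ltn // yt00 add0r /yt -sum_blocks.
    by apply: blk_le1; [exact: y0 i | exact: y4 i].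
have ytr : respects_limits I' Bt yt.
  move=> k j /=; rewrite /yt.
  under eq_bigr do rewrite mulr_sumr.
  rewrite exchange_big /=.
  apply: le_trans (ler_sum _ (fun t _ => yr t j)) _.
  rewrite sumr_const_nat; case: k => [|k]; first by rewrite mulr0n ltW.
  have e : forall x : R, x *+ L = x * L%:R by move=> x; rewrite mulr_natr.
  by rewrite /= mulSn subSS addnK e divfK.
have key := Hsw (ceild L T) yt yta ytr.
have eqSW : SW I (batching ALG L I) (T + (Gt + 1) * L)
    = SW I' (ALG n I') ((T + (Gt + 1) * L) %/ L).
  rewrite /SW.
  rewrite (eq_bigr (fun t => if (L %| t)%N then \sum_i ALG n I' i (t %/ L)%N * value I i ((t %/ L) * L) else 0)); last first.
    move=> t _; rewrite /batching; case: ifP => Lt; last by rewrite big1 // => i _; rewrite mul0r.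
    by rewrite divnK.
  rewrite (@sum_batch _ L (fun k => \sum_i ALG n I' i k * value I i (k * L))) //.
  have -> : ceild L 1 = 1%N by rewrite /ceild add1n prednK // divnn L0.
  have -> : ceild L (T + (Gt + 1) * L).+1 = ((T + (Gt + 1) * L) %/ L).+1.
    rewrite /ceild addSn -addnS prednK // divnDr ?dvdnn //. rewrite divnn L0; exact: addn1.
  apply: eq_big_nat => k /andP [k1 _]; apply: eq_bigr => i _.
  case: (ltnP k (batch_arr L I i)) => hk; first by rewrite (A3 i k hk) !mul0r.
  by rewrite value_batch.
have key2 : (1 - rho_max I) ^+ L.-1 * SW I y (ceild L T * L) <= SW I' yt (ceild L T).
  rewrite /SW sum_blocks mulr_sumr.
  apply: ler_sum_nat => k /andP [k1 _].
  rewrite mulr_sumr /yt.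
  under [X in _ <= X]eq_bigr do rewrite mulr_suml.
  rewrite [X in _ <= X]exchange_big /=.
  apply: ler_sum_nat => t /andP [ht1 ht2].
  rewrite mulr_sumr; apply: ler_sum => i _.
  case: (ltnP t (arr I i)) => ha; first by rewrite y3 // !mul0r mulr0.
  have kk : (L + k.-1 * L = k * L)%N by rewrite -mulSn prednK.
  have hk : (batch_arr L I i <= k)%N.
    rewrite -ltnS /batch_arr ltn_divLR // mulSn.
    move: ha ht2 L0; clear; lia.
  rewrite value_batch // mulrCA ler_wpM2l //.
  have dd : (k * L - arr I i = (t - arr I i) + (k * L - t))%N.
    move: ha ht2; clear; lia.
  have -> : value I i (k * L) = value I i t * (1 - disc I i) ^+ (k * L - t).
    by rewrite /value dd exprD mulrA.
  rewrite mulrC ler_wpM2l ?value_ge0 //.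
  have [_ [_ [/andP [d0 d1] _]]] := vI i.
  apply: (@le_trans _ _ ((1 - disc I i) ^+ L.-1)).
    by apply: lerXn2r; rewrite ?nnegrE ?subr_ge0 // lerD2l lerN2.
  apply: ler_wiXn2l; rewrite ?subr_ge0 ?lerBlDr ?lerDl //.
  move: kk ht1 ht2; clear; lia.
rewrite eqSW.
apply: (@le_trans _ _ (lt * SW I' yt (ceild L T))).
  rewrite mulrAC mulrC ler_wpM2l //; apply: le_trans key2.
  rewrite ler_wpM2l // SW_mono //; exact: ceild_ge.
apply: le_trans key _; apply: SW_mono => //.
rewrite leq_divRL // mulnDl; have := @ceild_le L T L0.
clear; lia.
Qed.
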